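(* Let $r\ge 2$ and let $H$ be an $r$-graph with at least $g(r,4)$ edges. Then there is a constant $b=b(H)>0$ such that $C_r(n,H)=\Omega(n^b)$ as $n\to\infty$.
   Context: An $r$-graph is an $r$-uniform hypergraph; $K_n^{(r)}$ is the complete $r$-graph on $n$ vertices. A copy of an $r$-graph $H$ in $K_n^{(r)}$ is a subhypergraph isomorphic to $H$. An $(n,r,H)$-local coloring with $k$ colors is a family of edge-colorings $f_v:E(K_n^{(r)})\to[k]$, one per vertex $v$, such that for every copy $T$ of $H$ there is $u\in V(T)$ with $f_u$ injective on $E(T)$. $C_r(n,H)$ is the minimum such $k$. A sunflower $S_r(d,m)$ is an $r$-graph with $m$ edges that pairwise intersect in the same $d$-vertex set. $g(r,m)$ denotes the minimum integer $N$ such that every $r$-graph with at least $N$ edges contains a sunflower $S_r(d,m)$ for some $0\le d\le r-1$ (by Erdős–Rado, $(m-1)^r\le g(r,m)\le (m-1)^r r!+1$). *)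

(* Defs.v *)
From mathcomp Require Import all_boot.
From mathcomp Require Import boolp.
Set Implicit Arguments. Unset Strict Implicit. Unset Printing Implicit Defensive.

(* Minimum of a (Prop-valued) set of naturals; 0 if the set is empty
   (the default never matters below). *)
Definition min_nat (P : nat -> Prop) : nat :=
  match pselect (exists n, P n) with
  | left h =>
      @ex_minn (fun n => `[< P n >])
        (let: ex_intro n Pn := h in ex_intro _ n (introT (asboolP (P n)) Pn))
  | right _ => 0
  end.

Definition r_graph (r : nat) (V : finType) (E : {set {set V}}) : Prop :=
  forall e, e \in E -> #|e| = r.

Definition has_sunflower (r d m : nat) (V : finType) (E : {set {set V}}) : Prop :=
  exists (S : {set {set V}}) (D : {set V}),
    [/\ S \subset E, #|S| = m, #|D| = d &
        forall e1 e2, e1 \in S -> e2 \in S -> e1 != e2 -> e1 :&: e2 = D].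

Definition has_some_sunflower (r m : nat) (V : finType) (E : {set {set V}}) : Prop :=
  exists d, d <= r - 1 /\ has_sunflower r d m E.

Definition g (r m : nat) : nat :=
  min_nat (fun N => forall (V : finType) (E : {set {set V}}),
             r_graph r E -> N <= #|E| -> has_some_sunflower r m E).

(* A copy of H (vertex type VH, edges EH) in K_n^(r) is given by an injective
   vertex map phi : VH -> 'I_n; its vertex set is phi @: VH and its edge set
   is the image of EH. *)
Definition copy_vertices (VH : finType) (n : nat) (phi : VH -> 'I_n) : {set 'I_n} :=
  phi @: [set: VH].
Definition copy_edges (VH : finType) (EH : {set {set VH}}) (n : nat)
  (phi : VH -> 'I_n) : {set {set 'I_n}} :=
  (fun e : {set VH} => phi @: e) @: EH.

(* An (n,r,H)-local coloring with k colors: one edge-coloring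
   f v : E(K_n^(r)) -> [k] per vertex v (given on all subsets, only r-subsets
   matter) such that every copy T of H has a vertex u with f u injective on E(T). *)
Definition local_coloring (r n k : nat) (VH : finType) (EH : {set {set VH}})
  (f : 'I_n -> {set 'I_n} -> 'I_k) : Prop :=
  forall phi : VH -> 'I_n, injective phi ->
    exists2 u, u \in copy_vertices phi &
      {in copy_edges EH phi &, injective (f u)}.

Definition C_loc (r n : nat) (VH : finType) (EH : {set {set VH}}) : nat :=
  min_nat (fun k => exists f : 'I_n -> {set 'I_n} -> 'I_k, local_coloring r EH f).

(* Main.v *)
Require Import Defs.
From mathcomp Require Import all_boot zify boolp.
Set Implicit Arguments. Unset Strict Implicit. Unset Printing Implicit Defensive.

Lemma pigeon (T U : finType) (A : {set T}) (B : {set U}) (f : T -> U) m :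
  {in A, forall x, f x \in B} -> #|B| * m < #|A| ->
  exists2 y, y \in B & m < #|[set x in A | f x == y]|.
Proof.
move=> fAB lt.
suff /existsP[y /andP[yB Hy]] : [exists y, (y \in B) && (m < #|[set x in A | f x == y]|)].
  by exists y.
apply: contraTT lt => /existsPn H; rewrite -leqNgt.
rewrite -sum1_card (partition_big f (mem B)) //=.
rewrite -sum_nat_const leq_sum // => y yB.
have := H y; rewrite yB /= -leqNgt => Hy.
by apply: leq_trans Hy; rewrite -sum1_card; apply: eq_leq; apply: eq_bigl => x; rewrite inE.
Qed.

Lemma sub_card (T : finType) (A : {set T}) m : m <= #|A| ->
  exists2 S : {set T}, S \subset A & #|S| = m.
Proof.
case/card_geqP=> s [us ss sA]; exists [set x in s].
  by apply/subsetP=> x; rewrite inE; apply: sA.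
by rewrite cardsE (card_uniqP us).
Qed.

Definition sunfl (V : finType) (E : {set {set V}}) :=
  exists (S : {set {set V}}) (D : {set V}),
    [/\ S \subset E, #|S| = 4 &
        forall e1 e2, e1 \in S -> e2 \in S -> e1 != e2 -> e1 :&: e2 = D].

Lemma ER r : forall (V : finType) (E : {set {set V}}),
  r_graph r E -> 3 ^ r * r`! < #|E| -> sunfl E.
Proof.
elim: r => [|r IH] V E rE big.
  exfalso; move: big; rewrite expn0 fact0 /= ltnNge; apply/negP/negPn.
  apply: leq_trans (_ : #|[set (set0 : {set V})]| <= 1); last by rewrite cards1.
  apply: subset_leq_card; apply/subsetP=> e eE; rewrite inE; apply/eqP.
  by apply/eqP; rewrite -cards_eq0 rE.
pose P := fun M : {set {set V}} => (M \subset E) && trivIset M.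
have P0 : P set0 by rewrite /P sub0set; apply/trivIsetP=> A B; rewrite inE.
have [M maxM _] := maxset_exists P0.
have /andP[ME tM] := maxsetp maxM.
case: (leqP 4 #|M|) => [M4 | M3].
  have [S SM cS] := sub_card M4.
  exists S, set0; split => //; first exact: subset_trans SM ME.
  move=> e1 e2 e1S e2S ne; apply: disjoint_setI0.
  by move/trivIsetP: tM; apply; rewrite // (subsetP SM).
pose U := cover M.
have cU : #|U| <= 3 * r.+1.
  move/eqP: tM; rewrite /U => <-.
  rewrite (eq_bigr (fun _ => r.+1)); last by move=> B BM; rewrite rE // (subsetP ME).
  rewrite sum_nat_const; apply: leq_mul => //; by rewrite -ltnS cardsE.
have meet : forall e, e \in E -> e :&: U != set0.
  move=> e eE; apply/negP => /eqP eU.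
  have eM : e \notin M.
    apply/negP=> eM; have : e \subset U by rewrite /U /cover (bigcup_sup e).
    move=> /setIidPl; rewrite eU => e0.
    by move: (rE e eE); rewrite -e0 cards0.
  have dis : {in M, forall B : {set V}, [disjoint e & B]}.
    move=> B BM; rewrite -setI_eq0; apply/eqP/setP=> x; rewrite !inE.
    apply/negP=> /andP[xe xB].
    have : x \in e :&: U by rewrite inE xe /U /cover; apply/bigcupP; exists B.
    by rewrite eU inE.
  have s0 : set0 \notin M.
    by apply/negP=> /(subsetP ME) /rE; rewrite cards0.
  have [tM' _] := trivIsetU1 dis tM s0.
  have PM' : P (e |: M) by rewrite /P tM' andbT subUset sub1set eE ME.
  have := maxsetsup maxM PM' (subsetUr _ _) => eq.
  by move: eM; rewrite -eq setU11.
pose f := fun e : {set V} => [pick x in e :&: U].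
have fB : {in E, forall e, f e \in Some @: U}.
  move=> e eE; rewrite /f; case: pickP => [x|].
    by rewrite inE => /andP[_ xU]; apply: imset_f.
  by move=> h; have /set0Pn[x xeU] := meet e eE; rewrite /= h in xeU.
have cB : #|Some @: U| * (3 ^ r * r`!) < #|E|.
  rewrite card_imset; last by move=> ? ? [].
  apply: leq_ltn_trans big; rewrite expnS factS.
  apply: leq_trans (leq_mul cU (leqnn _)) _.
  by apply: eq_leq; rewrite -!mulnA; congr (3 * _); rewrite mulnCA.
have [y /imsetP[x xU ->] cx] := pigeon fB cB.
set Ex := [set e in E | f e == Some x] in cx.
have xEx : forall e, e \in Ex -> x \in e /\ e \in E.
  move=> e; rewrite inE => /andP[eE]; rewrite /f; case: pickP => // z.
  by rewrite inE => /andP[ze _] /eqP[<-].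
pose E' := (fun e => e :\ x) @: Ex.
have cE' : #|E'| = #|Ex|.
  apply/eqP/imset_injP => a b /xEx[xa _] /xEx[xb _] eab.
  by rewrite -(setD1K xa) -(setD1K xb) eab.
have rE' : r_graph r E'.
  move=> e' /imsetP[e /xEx[xe eE] ->].
  by have := rE e eE; rewrite (cardsD1 x) xe add1n => -[].
have [S' [D' [S'E cS' sf]]] := IH V E' rE' (ltac:(by rewrite cE')).
have nx : forall a, a \in S' -> x \notin a.
  by move=> a /(subsetP S'E) /imsetP[e _ ->]; rewrite setD11.
exists ((fun a => x |: a) @: S'), (x |: D'); split.
- apply/subsetP=> e /imsetP[a aS ->].
  have /imsetP[e0 /xEx[xe0 e0E] ->] := subsetP S'E a aS.
  by rewrite setD1K.
- rewrite -cS'; apply/eqP/imset_injP => a b aS bS eab.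
  by rewrite -(setU1K (nx a aS)) -(setU1K (nx b bS)) eab.
- move=> e1 e2 /imsetP[a aS ->] /imsetP[b bS ->] ne.
  rewrite -setUIr sf //; apply: contraNneq ne => ->; done.
Qed.

Lemma four (J X Y : finType) (chi : J -> J -> X) (psi : J -> Y) :
  #|Y| * ((#|X|).+1 + (#|X|).+1 ^ 2 * #|X| ^ 2) < #|J| ->
  exists a b c d : J, [/\ [/\ a != b, c != d, a != c & a != d],
     [/\ b != c, b != d & psi c = psi d],
     [/\ chi c a = chi c b & chi d a = chi d b] &
     [/\ chi a c = chi a d & chi b c = chi b d]].
Proof.
move=> big.
have [y _ cJ1] := @pigeon _ _ [set: J] [set: Y] psi ((#|X|).+1 + (#|X|).+1 ^ 2 * #|X| ^ 2) (fun x _ => in_setT (psi x))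
   (ltac:(by rewrite !cardsT)).
set J1 := [set x in [set: J] | psi x == y] in cJ1.
have [A AJ1 cA] := @sub_card _ J1 (#|X|).+1 (leq_trans (leq_addr _ _) (ltnW cJ1)).
pose g := fun c : J => [pick ab : J * J | (ab.1 \in A) && (ab.2 \in A) && (ab.1 != ab.2)
                          && (chi c ab.1 == chi c ab.2)].
have gB : {in J1 :\: A, forall c, g c \in Some @: setX A A}.
  move=> c _; rewrite /g; case: pickP => [[a b] /= /andP[/andP[/andP[aA bA] _] _]|].
    by apply: imset_f; rewrite inE aA bA.
  move=> H; exfalso.
  have [z _ cz] := @pigeon _ _ A [set: X] (chi c) 1 (fun x _ => in_setT _)
     (ltac:(by rewrite cardsT muln1 cA)).
  have /card_gt1P[a [b [aF bF ab]]] := cz.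
  move: aF bF; rewrite !inE => /andP[aA /eqP az] /andP[bA /eqP bz].
  by have := H (a, b); rewrite /= aA bA ab az bz eqxx.
have cB : #|Some @: setX A A| * (#|X| ^ 2) < #|J1 :\: A|.
  rewrite card_imset; last by move=> ? ? [].
  rewrite cardsX cA cardsD (setIidPr AJ1) cA.
  move: cJ1; set u := #|X|; set w := #|J1|; rewrite -!mulnn; move=> h.
  move: h; set q := u.+1 * u.+1 * (u * u); lia.
have [ab0 /imsetP[[a b] abA ->] cF] := pigeon gB cB.
set F := [set x in J1 :\: A | g x == Some (a, b)] in cF.
have Fp : forall c, c \in F ->
    [/\ c \notin A, psi c = y, a \in A, b \in A & (a != b) /\ chi c a = chi c b].
  move=> c; rewrite !inE => /andP[/andP[cA' cJ] ]; rewrite /g.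
  case: pickP => // -[a' b'] /= /andP[/andP[/andP[aA bA] ab] /eqP e] /eqP[<- <-].
  by move/eqP: cJ => cJ; split.
have [z _ cz] := @pigeon _ _ F [set: X * X] (fun c => (chi a c, chi b c)) 1
     (fun x _ => in_setT _) (ltac:(by rewrite cardsT muln1 card_prod mulnn)).
have /card_gt1P[c [d [cF' dF' cd]]] := cz.
move: cF' dF'; rewrite [c \in _]inE [d \in _]inE => /andP[cF' /eqP cz'] /andP[dF' /eqP dz'].
have [cA' psc aA bA [ab ec]] := Fp c cF'.
have [dA' psd _ _ [_ ed]] := Fp d dF'.
have ne : forall u v, u \in A -> v \notin A -> u != v.
  by move=> u v uA vA; apply: contraNneq vA => <-.
exists a, b, c, d; split; split => //; try by apply: ne.
- by rewrite psc psd.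
- by move: cz'; rewrite -dz' => -[].
- by move: cz'; rewrite -dz' => -[].
Qed.

Lemma collide (VH : finType) (EH : {set {set VH}}) n k (f : 'I_n -> {set 'I_n} -> 'I_k)
  (phi : VH -> 'I_n) (e1 e2 : {set VH}) u :
  injective phi -> e1 \in EH -> e2 \in EH -> e1 != e2 ->
  f u (phi @: e1) = f u (phi @: e2) ->
  ~ {in copy_edges EH phi &, injective (f u)}.
Proof.
move=> phiI e1E e2E ne eq inj.
have := inj _ _ (imset_f _ e1E) (imset_f _ e2E) eq => /imset_inj => h.
by move: ne; rewrite h // eqxx.
Qed.

Lemma main_bound (r : nat) (VH : finType) (EH : {set {set VH}})
  (e : 'I_4 -> {set VH}) (D : {set VH}) n k (f : 'I_n -> {set 'I_n} -> 'I_k) :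
  r_graph r EH -> (forall i, e i \in EH) -> injective e ->
  (forall i j, i != j -> e i :&: e j = D) ->
  local_coloring r EH f ->
  n %/ #|VH| <= (k ^ #|VH| * ((k ^ (r - #|D|)).+1 + (k ^ (r - #|D|)).+1 ^ 2 * (k ^ (r - #|D|)) ^ 2)).+1.
Proof.
move=> rE eE eI eD loc.
case: n f loc => [|n'] f loc; first by rewrite div0n.
set s := #|VH|; set p := r - #|D|.
set t := (n'.+1 %/ s).-1.
rewrite leqNgt; apply/negP => big0.
set K := _ * _ in big0.
have bigt : K < t by rewrite /t -ltnS prednK // (leq_ltn_trans _ big0).
have t0 : 0 < t by apply: leq_ltn_trans bigt.
pose o0 : 'I_4 := ord0.
pose o1 : 'I_4 := Ordinal (isT : 1 < 4).
pose o2 : 'I_4 := Ordinal (isT : 2 < 4).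
pose o3 : 'I_4 := Ordinal (isT : 3 < 4).
have Dsub : forall i, D \subset e i.
  move=> i; case: (eqVneq i o0) => [->|ne].
    by rewrite -(eD o0 o1) // subsetIl.
  by rewrite -(eD i o0 ne) subsetIl.
have Dlt : #|D| < r.
  rewrite ltnNge; apply/negP => rD.
  have h : forall i, D = e i.
    by move=> i; apply/eqP; rewrite eqEcard Dsub rE.
  by have := eI _ _ (etrans (esym (h o0)) (h o1)).
pose P i := e i :\: D.
have cP : forall i, #|P i| = p.
  by move=> i; rewrite /P cardsD (setIidPr (Dsub i)) rE.
have p0 : 0 < p by rewrite /p subn_gt0.
have ps : p <= s by rewrite -(cP o0) /s max_card.
have s0 : 0 < s by apply: leq_trans ps.
have [x0 _] : exists x0 : VH, x0 \in VH by apply/card_gt0P.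
have Pdis : forall i j x, x \in P i -> x \in P j -> i = j.
  move=> i j x; rewrite !inE => /andP[xD xi] /andP[_ xj].
  case: (eqVneq i j) => // ne; exfalso.
  by move: xD; rewrite -(eD i j ne) inE xi xj.
have eiU : forall i, e i = D :|: P i.
  by move=> i; rewrite /P -{1}(setID (e i) D) (setIidPr (Dsub i)).
have nt : t.+1 * s <= n'.+1.
  by rewrite /t prednK ?leq_divM //; apply: leq_ltn_trans big0.
pose pos (j m : nat) : 'I_n'.+1 := inord (s + j * s + m).
have valpos : forall (j : 'I_t) m, m < s -> (pos j m : nat) = s + j * s + m.
  move=> j m ms; rewrite inordK //.
  have jt := ltn_ord j.
  have : j.+2 * s <= t.+1 * s by rewrite leq_mul2r ltnS jt orbT.
  nia.
pose core (u : VH) : 'I_n'.+1 := inord (enum_rank u).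
have valcore : forall u, (core u : nat) = enum_rank u.
  move=> u; rewrite inordK //; have := ltn_ord (enum_rank u); rewrite -/s.
  nia.
pose petal_of x := [pick i | x \in P i].
have petal_ofE : forall i x, x \in P i -> petal_of x = Some i.
  move=> i x xi; rewrite /petal_of; case: pickP => [j xj|/(_ i)]; last by rewrite xi.
  by rewrite (Pdis _ _ _ xj xi).
have petal_ofS : forall i x, petal_of x = Some i -> x \in P i.
  by move=> i x; rewrite /petal_of; case: pickP => // j xj [<-].
have petal_ofD : forall x, x \in D -> petal_of x = None.
  move=> x xD; rewrite /petal_of; case: pickP => // j.
  by rewrite inE xD.
pose idx i x := index x (enum (P i)).
have idx_lt : forall i x, x \in P i -> idx i x < p.
  by move=> i x xi; rewrite /idx -(cP i) cardE index_mem mem_enum.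
pose phi (beta : 'I_4 -> 'I_t) x :=
  if petal_of x is Some i then pos (beta i) (idx i x) else core x.
have phiI : forall beta, injective beta -> injective (phi beta).
  move=> beta bI x y; rewrite /phi.
  case Hx: (petal_of x) => [i|]; case Hy: (petal_of y) => [j|] => /(congr1 (@nat_of_ord _)).
  - have xi := petal_ofS _ _ Hx; have yj := petal_ofS _ _ Hy.
    have ix := idx_lt _ _ xi; have iy := idx_lt _ _ yj.
    rewrite !valpos ?(leq_trans _ ps) // => h.
    have h2 : beta i * s + idx i x = beta j * s + idx j y by lia.
    have hb : beta i = beta j :> nat.
      have := congr1 (fun z => z %/ s) h2.
      by rewrite /= !divnMDl // !divn_small ?(leq_trans _ ps) // !addn0.
    have ij : i = j by apply: bI; apply: val_inj.
    subst j.
    have hi : idx i x = idx i y by lia.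
    have xe : x \in enum (P i) by rewrite mem_enum.
    have ye : y \in enum (P i) by rewrite mem_enum.
    by rewrite -(nth_index x0 xe) -(nth_index x0 ye); move: hi; rewrite /idx => ->.
  - have ix := idx_lt _ _ (petal_ofS _ _ Hx).
    rewrite valpos ?(leq_trans _ ps) // valcore.
    have := ltn_ord (enum_rank y); rewrite -/s; lia.
  - have iy := idx_lt _ _ (petal_ofS _ _ Hy).
    rewrite valpos ?(leq_trans _ ps) // valcore.
    have := ltn_ord (enum_rank x); rewrite -/s; lia.
  - by rewrite !valcore => /val_inj /enum_rank_inj.
pose E (j : 'I_t) := core @: D :|: [set pos j (nat_of_ord m) | m : 'I_p].
have phiE : forall beta i, phi beta @: e i = E (beta i).
  move=> beta i; rewrite eiU imsetU; congr (_ :|: _).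
    by apply: eq_in_imset => x xD; rewrite /phi petal_ofD.
  apply/setP => y; apply/imsetP/imsetP.
    move=> [x xP ->]; exists (Ordinal (idx_lt _ _ xP)) => //.
    by rewrite /phi (petal_ofE _ _ xP).
  move=> [m _ ->].
  have ms : m < size (enum (P i)) by rewrite -cardE cP.
  exists (nth x0 (enum (P i)) m); first by rewrite -mem_enum mem_nth.
  rewrite /phi (petal_ofE i); last by rewrite -mem_enum mem_nth.
  by rewrite /idx index_uniq ?enum_uniq.
pose chi (j j' : 'I_t) : {ffun 'I_p -> 'I_k} := [ffun m : 'I_p => f (pos j m) (E j')].
pose psi (j : 'I_t) : {ffun VH -> 'I_k} := [ffun u => f (core u) (E j)].
have [a [b [c [d [[ab cd ac ad] [bc bd pcd] [cab dab] [acd bcd]]]]]] := four chi psi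
  (ltac:(by rewrite !card_ffun !card_ord)).
pose beta (i : 'I_4) : 'I_t := nth a [:: a; b; c; d] i.
have bI : injective beta.
  have := ab; have := ac; have := ad; have := bc; have := bd; have := cd.
  move=> h1 h2 h3 h4 h5 h6.
  move=> [[|[|[|[|x]]]] hx] [[|[|[|[|y]]]] hy] //=; rewrite /beta /=;
   try (by move=> eq; apply: val_inj);
   try (by move=> eq; rewrite eq eqxx in h1 h2 h3 h4 h5 h6).
have [u /imsetP[x _ ->] uinj] := loc (phi beta) (phiI beta bI).
have bE : forall i1 i2, i1 != i2 ->
    f (phi beta x) (E (beta i1)) = f (phi beta x) (E (beta i2)) -> False.
  move=> i1 i2 ne eq; apply: (collide (phiI beta bI) (eE i1) (eE i2)) uinj.
    by apply: contra_neq ne => /eI.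
  by rewrite !phiE.
case Hx: (petal_of x) => [i|].
  have xi := petal_ofS _ _ Hx.
  have ux : phi beta x = pos (beta i) (Ordinal (idx_lt _ _ xi)) by rewrite /phi Hx.
  have : exists i1 i2, i1 != i2 /\ chi (beta i) (beta i1) = chi (beta i) (beta i2).
    move: i {Hx xi ux}=> [[|[|[|[|i]]]] hi] //.
    - by exists o2, o3.
    - by exists o2, o3.
    - by exists o0, o1.
    - by exists o0, o1.
  move=> [i1 [i2 [ne heq]]]; apply: (bE i1 i2 ne).
  by rewrite ux; move: (congr1 (fun g : {ffun 'I_p -> 'I_k} => g (Ordinal (idx_lt _ _ xi))) heq); rewrite !ffunE.
have ux : phi beta x = core x by rewrite /phi Hx.
apply: (bE o2 o3) => //.
by rewrite ux; move: (congr1 (fun g : {ffun VH -> 'I_k} => g x) pcd); rewrite !ffunE.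
Qed.

Lemma sunfl_some r (V : finType) (E : {set {set V}}) :
  r_graph r E -> sunfl E -> has_some_sunflower r 4 E.
Proof.
move=> rE [S [D [SE cS pw]]]; exists #|D|; split; last by exists S, D.
have /card_gt1P[e1 [e2 [e1S e2S ne]]] : 1 < #|S| by rewrite cS.
rewrite leqNgt; apply/negP => rD.
have rD' : r <= #|D| by lia.
have h : forall e, e \in S -> e \in S -> e1 \in S -> D = e.
  move=> e eS _ _; have Dsub : D \subset e.
    case: (eqVneq e e1) => [->|nee].
      by rewrite -(pw e1 e2) // subsetIl.
    by rewrite -(pw e e1) // subsetIl.
  apply/eqP; rewrite eqEcard Dsub rE ?(subsetP SE) //.
by move: ne; rewrite -(h e1 e1S e1S e1S) -(h e2 e2S e2S e1S) eqxx.
Qed.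

Lemma g_spec r (V : finType) (E : {set {set V}}) :
  r_graph r E -> g r 4 <= #|E| -> has_some_sunflower r 4 E.
Proof.
rewrite /g /min_nat; case: pselect => [h|nh].
  case: ex_minnP => m /asboolP Pm _ rE mE; exact: Pm.
exfalso; apply: nh; exists (3 ^ r * r`!).+1 => V' E' rE' cE'.
by apply: sunfl_some => //; apply: (ER rE').
Qed.

Lemma Cloc_spec r n (VH : finType) (EH : {set {set VH}}) (x0 : VH) :
  exists f : 'I_n -> {set 'I_n} -> 'I_(C_loc r n EH), local_coloring r EH f.
Proof.
rewrite /C_loc /min_nat; case: pselect => [h|nh].
  by case: ex_minnP => m /asboolP Pm _.
exfalso; apply: nh; exists #|{set 'I_n}|.
exists (fun _ A => enum_rank A) => phi _.
exists (phi x0); first by apply: imset_f.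
by move=> A B _ _ /enum_rank_inj.
Qed.

Lemma arith (Q kp : nat) : 0 < Q -> kp <= Q ->
  (Q * (kp.+1 + kp.+1 ^ 2 * kp ^ 2)).+2 <= 8 * Q ^ 5.
Proof.
move=> Q0 kQ.
have h1 : Q * (kp.+1 + kp.+1 ^ 2 * kp ^ 2) <= Q * (Q.+1 + Q.+1 ^ 2 * Q ^ 2).
  rewrite leq_mul2l; apply/orP; right; apply: leq_add; first by rewrite ltnS.
  by apply: leq_mul; rewrite leq_exp2r // ltnS.
apply: leq_trans (_ : (Q * (Q.+1 + Q.+1 ^ 2 * Q ^ 2)).+2 <= _); first by rewrite !ltnS.
rewrite !expnS !expn0 !muln1; nia.
Qed.

Lemma nat_bound r (VH : finType) (EH : {set {set VH}}) :
  2 <= r -> r_graph r EH -> g r 4 <= #|EH| ->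
  0 < #|VH| /\ forall n, 2 * #|VH| <= n ->
    0 < C_loc r n EH /\ n <= (8 * #|VH|) * C_loc r n EH ^ (5 * #|VH|).
Proof.
move=> r2 rE gE.
have [d [_ [S [D [SE cS _ pw]]]]] := g_spec rE gE.
pose e (i : 'I_4) := nth set0 (enum S) i.
have sz : size (enum S) = 4 by rewrite -cardE.
have eS : forall i, e i \in S.
  by move=> i; rewrite -mem_enum mem_nth // sz.
have eE : forall i, e i \in EH by move=> i; apply: (subsetP SE).
have eI : injective e.
  move=> i j /eqP; rewrite /e nth_uniq ?sz ?enum_uniq // => /eqP; apply: val_inj.
have eD : forall i j, i != j -> e i :&: e j = D.
  by move=> i j ne; apply: pw => //; apply: contra_neq ne => /eI.
have [x0 _] : exists x0, x0 \in e ord0.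
  by apply/card_gt0P; rewrite (rE _ (eE ord0)); apply: leq_trans r2.
have s0 : 0 < #|VH| by apply/card_gt0P; exists x0.
split => // n sn.
have [f loc] := Cloc_spec r n EH x0.
have := main_bound rE eE eI eD loc.
set k := C_loc r n EH; set s := #|VH|; set p := r - #|D|.
move=> hb.
have ns : n < (n %/ s).+1 * s by apply: ltn_ceil.
have ps : p <= s.
  by apply: leq_trans (leq_subr _ _) _; rewrite -(rE _ (eE ord0)) max_card.
have k0 : 0 < k.
  rewrite lt0n; apply/negP => /eqP k0.
  move: hb; rewrite k0 exp0n // mul0n => hb.
  have : n < 2 * s by apply: leq_trans ns _; rewrite leq_mul2r; apply/orP; right.
  by rewrite ltnNge sn.
split => //.
have kpQ : k ^ p <= k ^ s by apply: leq_pexp2l.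
have Q0 : 0 < k ^ s by rewrite expn_gt0 k0.
have := arith Q0 kpQ => ar.
have : n < (8 * (k ^ s) ^ 5) * s.
  apply: leq_trans ns _; rewrite leq_mul2r; apply/orP; right.
  by apply: leq_trans ar; rewrite ltnS.
rewrite -expnM => /ltnW h; apply: leq_trans h _.
by rewrite mulnAC [s * 5]mulnC.
Qed.

From Stdlib Require Import Reals Lra.
Unset Implicit Arguments.

Lemma real_bound (A L n k : nat) : 0 < A -> 0 < L -> 0 < n -> 0 < k -> n <= A * expn k L ->
 (/ Rpower (INR A) (/ INR L) * Rpower (INR n) (/ INR L) <= INR k)%R.
Proof.
move=> A0 L0 n0 k0 h.
have pos : forall m, 0 < m -> (0 < INR m)%R by move=> m /ltP; apply: lt_0_INR.
have hA := pos A A0; have hL := pos L L0; have hn := pos n n0; have hk := pos k k0.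
have hb : (0 <= / INR L)%R by apply/Rlt_le/Rinv_0_lt_compat.
have hkL : (0 < INR k ^ L)%R by apply: pow_lt.
have le : (INR n <= INR A * INR k ^ L)%R.
  have pe : forall a b, INR (expn a b) = (INR a ^ b)%R.
    by move=> a; elim=> [|b IH]; [rewrite expn0 | rewrite expnS mult_INR IH].

  by rewrite -pe -mult_INR; apply: le_INR; apply/leP.
have h1 : (Rpower (INR n) (/ INR L) <= Rpower (INR A) (/ INR L) * INR k)%R.
  apply: Rle_trans (Rle_Rpower_l _ _ _ hb (conj hn le)) _.
  rewrite -Rpower_mult_distr // -Rpower_pow // Rpower_mult Rinv_r; last by lra.
  by rewrite Rpower_1 //; apply: Rle_refl.
have hRA : (0 < Rpower (INR A) (/ INR L))%R by apply: exp_pos.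
apply: Rle_trans (Rmult_le_compat_l _ _ _ (Rlt_le _ _ (Rinv_0_lt_compat _ hRA)) h1) _.
rewrite -Rmult_assoc Rinv_l; last by lra.
rewrite Rmult_1_l; apply: Rle_refl.
Qed.

Theorem theorem5 (r : nat) (VH : finType) (EH : {set {set VH}}) :
  2 <= r -> r_graph r EH -> g r 4 <= #|EH| ->
  exists b : R, (0 < b)%R /\
    exists c : R, (0 < c)%R /\
      exists N : nat, forall n : nat, N <= n ->
        (c * Rpower (INR n) b <= INR (C_loc r n EH))%R.
Proof.
move=> r2 rE gE.
have [s0 nb] := nat_bound r2 rE gE.
have L0 : (0 < INR (5 * #|VH|))%R by apply: lt_0_INR; apply/ltP; rewrite muln_gt0 s0.
exists (/ INR (5 * #|VH|))%R; split; first by apply: Rinv_0_lt_compat.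
exists (/ Rpower (INR (8 * #|VH|)) (/ INR (5 * #|VH|)))%R; split.
  by apply: Rinv_0_lt_compat; apply: exp_pos.
exists (2 * #|VH|) => n sn.
have [k0 h] := nb n sn.
apply: real_bound => //; rewrite ?muln_gt0 ?s0 //.
by apply: leq_trans sn; rewrite muln_gt0 s0.
Qed.
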